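(* Let $p$ be a prime, $m,t\ge 1$, $B=\mathrm{GF}(p^m)$ and $F=\mathrm{GF}(p^{mt})$, and assume that $t$ is divisible by $p$ (the characteristic of $F$). Let $n=|F|=|B|^t$, $k=n(1-1/|B|)$, and let $\mathcal{C}=\mathrm{RS}(F,k)=\{(f(\alpha))_{\alpha\in F} : f\in F[x],\ \deg f<k\}$, where the symbol $f(\alpha)$ is stored at the node indexed by $\alpha$. Then for any two distinct $\alpha^*,\overline{\alpha}\in F$, a repair center can recover both erased symbols $f(\alpha^* )$ and $f(\overline{\alpha})$ by downloading a total of $2(n-2)$ sub-symbols (elements of $B$), namely two sub-symbols from each surviving node $\alpha\in F\setminus\{\alpha^*,\overline{\alpha}\}$, each computed from the symbol $f(\alpha)$ stored at that node.
   Context: Elements of $F$ are called symbols and elements of $B$ sub-symbols. The trace is $\mathrm{Tr}_{F/B}(x)=\sum_{i=0}^{t-1}x^{|B|^i}$. In centralized repair, a single repair center downloads data from the surviving nodes and computes all erased symbols; the repair bandwidth is the total number of sub-symbols it downloads. *)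

(* Defs.v *)
From HB Require Import structures.
From mathcomp Require Import all_boot all_order all_algebra all_field.
Set Implicit Arguments. Unset Strict Implicit. Unset Printing Implicit Defensive.
Import GRing.Theory.
Local Open Scope ring_scope.

(* Reed-Solomon code RS(F,k): evaluation of polynomials of degree < k
   (i.e. size <= k) at all points of F; node alpha stores f.[alpha]. *)
Definition RS_poly (F : finFieldType) (k : nat) (f : {poly F}) : bool :=
  (size f <= k)%N.

Definition rs_dim (F B : finFieldType) : nat :=
  (#|F| - #|F| %/ #|B|)%N.

(* Data received by the repair center: two sub-symbols (in B) from each
   surviving node alpha, computed by h alpha from the stored symbol f(alpha);
   nothing (0) from the erased nodes. *)
Definition downloaded (F B : finFieldType) (a1 a2 : F)
  (h : F -> F -> 'I_2 -> B) (f : {poly F}) : F -> 'I_2 -> B :=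
  fun a i => if (a != a1) && (a != a2) then h a f.[a] i else 0.

(* Main.v *)
Require Import Defs.
From HB Require Import structures.
From mathcomp Require Import all_boot all_order all_algebra all_field zify.
From Stdlib Require Import ClassicalEpsilon.
Import GRing.Theory.
Local Open Scope ring_scope.

Definition trF {F : finFieldType} (q t : nat) (x : F) : F := \sum_(i < t) x ^+ (q ^ i).

Lemma tr_add (F : finFieldType) q t (hc : [pchar F].-nat q) (x y : F) :
  trF q t (x + y) = trF q t x + trF q t y.
Proof.
rewrite /trF -big_split /=; apply: eq_bigr => i _.
by rewrite exprDn_pchar // pnatX hc.
Qed.

Lemma tr0 (F : finFieldType) q t (hq : (0 < q)%N) : trF q t (0 : F) = 0.
Proof. by rewrite /trF big1 // => i _; rewrite expr0n expn_eq0 eqn0Ngt hq. Qed.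

Lemma tr_opp (F : finFieldType) q t (hq : (0 < q)%N) (hc : [pchar F].-nat q) (x : F) :
  trF q t (- x) = - trF q t x.
Proof.
apply/eqP; rewrite -addr_eq0 -tr_add // addNr tr0 //.
Qed.

Lemma tr_sum (F : finFieldType) q t (hq : (0 < q)%N) (hc : [pchar F].-nat q)
   (I : finType) (P : pred I) (G : I -> F) :
  trF q t (\sum_(i | P i) G i) = \sum_(i | P i) trF q t (G i).
Proof. by apply: big_morph; [exact: tr_add | exact: tr0]. Qed.

Lemma exp_fix {F : finFieldType} q (a : F) i : a ^+ q = a -> a ^+ (q ^ i) = a.
Proof. by move=> ha; elim: i => [|i IH]; [rewrite expn0 expr1 | rewrite expnSr exprM IH ha]. Qed.

Lemma tr_scal (F : finFieldType) q t (a x : F) : a ^+ q = a ->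
  trF q t (a * x) = a * trF q t x.
Proof.
move=> ha; rewrite /trF mulr_sumr; apply: eq_bigr => i _.
by rewrite exprMn (@exp_fix _ q a i ha).
Qed.

Lemma tr_fix (F : finFieldType) q t (hq : (0 < q)%N) (hc : [pchar F].-nat q) (x : F) :
  x ^+ (q ^ t) = x -> trF q t x ^+ q = trF q t x.
Proof.
move=> hx; rewrite /trF.
have ->: (\sum_(i < t) x ^+ (q ^ i)) ^+ q = \sum_(i < t) x ^+ (q ^ i.+1).
  elim: t {hx} => [|t IH]; first by rewrite !big_ord0 expr0n eqn0Ngt hq.
  by rewrite !big_ord_recr /= exprDn_pchar // IH -exprM expnSr.
case: t hx => [|t] hx; first by rewrite !big_ord0.
by rewrite big_ord_recr big_ord_recl /= hx addrC.
Qed.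

Lemma tr1 (F : finFieldType) q t : trF q t (1 : F) = t%:R.
Proof. by rewrite /trF (eq_bigr (fun _ => 1)) ?sumr_const ?card_ord // => i _; rewrite expr1n. Qed.
Lemma psum0 (F : finFieldType) (hn : (#|F|%:R : F) = 0) (j : nat) :
  (j < #|F|.-1)%N -> \sum_(x : F) x ^+ j = 0.
Proof.
move=> hj; case: j hj => [|j] hj.
  by rewrite (eq_bigr (fun _ => 1)) ?sumr_const // => x _; rewrite expr0.
have [c /andP[cnz cj]] : exists c : F, (c != 0) && (c ^+ j.+1 != 1).
  case: (boolP [exists c : F, (c != 0) && (c ^+ j.+1 != 1)]) => [/existsP // | /existsPn H]; exfalso.
  have Hr : all (root ('X^(j.+1) - 1)) (enum [pred x : F | x != 0]).
    apply/allP => x; rewrite mem_enum inE => xnz.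
    by have := H x; rewrite xnz /= negbK rootE !hornerE => /eqP ->; rewrite subrr.
  have := max_poly_roots _ Hr (enum_uniq _).
  rewrite -polyC1 size_XnsubC // -cardE cardC1 => H2.
  have nz : ('X^(j.+1) - 1%:P : {poly F}) != 0.
    by rewrite -size_poly_eq0 size_XnsubC.
  by move: (H2 nz); rewrite ltnS leqNgt hj.
have E : \sum_(x : F) x ^+ j.+1 = c ^+ j.+1 * \sum_(x : F) x ^+ j.+1.
  rewrite mulr_sumr [LHS](reindex_inj (mulfI cnz)) /=.
  by apply: eq_bigr => x _; rewrite exprMn.
move/eqP: E; rewrite -subr_eq0 -{1}(mul1r (\sum_(x : F) _)) -mulrBl mulf_eq0 subr_eq0 eq_sym (negbTE cj) /=.
by move/eqP.
Qed.

Lemma poly_sum0 (F : finFieldType) (hn : (#|F|%:R : F) = 0) (Q : {poly F}) :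
  (size Q <= #|F|.-1)%N -> \sum_(x : F) Q.[x] = 0.
Proof.
move=> hQ.
rewrite (eq_bigr (fun x => \sum_(i < size Q) Q`_i * x ^+ i)); last by move=> x _; rewrite horner_coef.
rewrite exchange_big /= big1 // => i _.
by rewrite -mulr_sumr psum0 ?mulr0 // (leq_trans (ltn_ord i) hQ).
Qed.

Definition Pu {F : finFieldType} (q t : nat) (a u : F) : {poly F} :=
  \sum_(i < t) u ^+ (q ^ i) *: ('X - a%:P) ^+ (q ^ i).-1.

Lemma Pu_horner (F : finFieldType) q t (a u x : F) :
  (Pu q t a u).[x] = \sum_(i < t) u ^+ (q ^ i) * (x - a) ^+ (q ^ i).-1.
Proof.
rewrite /Pu horner_sum; apply: eq_bigr => i _.
by rewrite hornerZ horner_exp hornerXsubC.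
Qed.

Lemma Pu_at (F : finFieldType) q t (hq : (1 < q)%N) (ht : (0 < t)%N) (a u : F) :
  (Pu q t a u).[a] = u.
Proof.
rewrite Pu_horner; case: t ht => [//|t] _.
rewrite big_ord_recl /= expn0 expr1 subrr expr0 mulr1 big1 ?addr0 // => i _.
rewrite expr0n; case: eqP => [|_]; last by rewrite mulr0.
by move/eqP; rewrite -subn1 subn_eq0 leqNgt expnS (leq_trans hq) // leq_pmulr // expn_gt0 (ltnW hq).
Qed.

Lemma Pu_mul (F : finFieldType) q t (hq : (0 < q)%N) (a u x : F) :
  (x - a) * (Pu q t a u).[x] = trF q t (u * (x - a)).
Proof.
rewrite Pu_horner /trF mulr_sumr; apply: eq_bigr => i _.
rewrite mulrCA -exprS prednK ?expn_gt0 ?hq // exprMn //.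
Qed.

Lemma Pu_size (F : finFieldType) q t (hq : (0 < q)%N) (a u : F) :
  (size (Pu q t a u) <= q ^ t.-1)%N.
Proof.
apply: leq_trans (size_sum _ _ _) _; apply/bigmax_leqP => i _.
apply: leq_trans (size_scale_leq _ _) _.
rewrite size_exp_XsubC prednK ?expn_gt0 ?hq //.
by apply: leq_pexp2l => //; rewrite -ltnS prednK // (leq_ltn_trans _ (ltn_ord i)).
Qed.

Lemma tr_nondeg (F : finFieldType) q t (hq : (1 < q)%N) (ht : (0 < t)%N)
  (hcard : #|F| = (q ^ t)%N) (X : F) :
  (forall u, trF q t (u * X) = 0) -> X = 0.
Proof.
move=> H; apply/eqP; apply/negPn/negP => Xnz.
have H0 : forall y : F, trF q t y = 0.
  by move=> y; rewrite -(divfK Xnz y) H.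
pose TP : {poly F} := \sum_(i < t) 'X^(q ^ i).
have Hr : all (root TP) (enum F).
  apply/allP => x _; rewrite rootE /TP horner_sum (eq_bigr (fun i : 'I_t => x ^+ (q ^ i))).
    by have := H0 x; rewrite /trF => ->.
  by move=> i _; rewrite hornerXn.
have TPnz : TP != 0.
  apply/eqP => /(congr1 (fun P : {poly F} => P`_1)); rewrite coef0 /TP coef_sum.
  clear -hq ht; case: t ht => [//|t] _.
  rewrite big_ord_recl /= expn0 coefXn eqxx big1 ?addr0; first by move/eqP; rewrite oner_eq0.
  move=> i _; rewrite coefXn; case: eqP => // /esym /eqP.
  have h1 : (1 < q ^ i.+1)%N by rewrite (leq_trans hq) // expnS leq_pmulr // expn_gt0 ltnW.
  by rewrite /bump leq0n add1n => /eqP h; rewrite h in h1.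
have := max_poly_roots TPnz Hr (enum_uniq _).
rewrite -cardE hcard.
have : (size TP <= (q ^ t.-1).+1)%N.
  apply: leq_trans (size_sum _ _ _) _; apply/bigmax_leqP => i _.
  rewrite size_polyXn ltnS leq_pexp2l ?(ltnW hq) //.
  by rewrite -ltnS prednK.
move=> h1 h2; have := leq_trans h2 h1.
rewrite ltnS leqNgt; move/negP; apply.
case: t ht {hcard H H0 Hr TPnz TP h1 h2} => [//|t] _ /=.
by rewrite expnS ltn_Pmull // expn_gt0 ltnW.
Qed.

Lemma Pu_at_ne (F : finFieldType) q t (hq : (0 < q)%N) (a u x : F) : x != a ->
  (Pu q t a u).[x] = trF q t (u * (x - a)) / (x - a).
Proof.
move=> xa; rewrite -(@Pu_mul _ q t hq a u x) mulrC mulKf // subr_eq0 //.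
Qed.

Lemma fixF (F : finFieldType) q t (hcard : #|F| = (q ^ t)%N) (x : F) : x ^+ (q ^ t) = x.
Proof. by rewrite -hcard expf_card. Qed.

Lemma key (F : finFieldType) q t (hq : (1 < q)%N) (ht : (0 < t)%N)
  (hc : [pchar F].-nat q) (hcard : #|F| = (q ^ t)%N) (hn : (#|F|%:R : F) = 0)
  (a b : F) (ab : a != b) (g : {poly F}) (hg : (size g <= #|F| - q ^ t.-1)%N)
  (H : forall x, x != a -> x != b -> trF q t (g.[x] / (x - a)) = 0) (u : F) :
  trF q t (u * g.[a]) + trF q t (u * (b - a)) * trF q t (g.[b] / (b - a)) = 0.
Proof.
have hq0 : (0 < q)%N by apply: ltnW.
have S : \sum_(x : F) (Pu q t a u * g).[x] = 0.
  apply: poly_sum0 => //.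
  have h1 := size_mul_leq (Pu q t a u) g.
  have h2 := @Pu_size _ q t hq0 a u.
  have h3 : (q ^ t.-1 <= #|F|)%N.
    by rewrite hcard leq_pexp2l // leq_pred.
  move: h1 h2 h3 hg; set X := (q ^ t.-1)%N; set N := #|F|; set s1 := size _; set s2 := size g.
  lia.
have Ex : forall x, x != a ->
    trF q t ((Pu q t a u * g).[x]) = trF q t (u * (x - a)) * trF q t (g.[x] / (x - a)).
  move=> x xa; rewrite hornerM Pu_at_ne // mulrAC -mulrA (@tr_scal _ q t (trF q t (u * (x - a)))) //.
  by rewrite tr_fix // fixF.
have := congr1 (trF q t) S; rewrite tr_sum // tr0 // (bigD1 a) //= (bigD1 b) 1?eq_sym //=.
rewrite big1 ?addr0.
  by rewrite (Ex b) 1?eq_sym // hornerM Pu_at.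
move=> x /andP[xb xa]; rewrite Ex //.
by rewrite H // mulr0.
Qed.

Lemma kernel (F : finFieldType) q t (hq : (1 < q)%N) (ht : (0 < t)%N)
  (hc : [pchar F].-nat q) (hcard : #|F| = (q ^ t)%N) (hn : (#|F|%:R : F) = 0)
  (ht0 : (t%:R : F) = 0)
  (a b : F) (ab : a != b) (g : {poly F}) (hg : (size g <= #|F| - q ^ t.-1)%N)
  (Ha : forall x, x != a -> x != b -> trF q t (g.[x] / (x - a)) = 0)
  (Hb : forall x, x != a -> x != b -> trF q t (g.[x] / (x - b)) = 0) :
  g.[a] = 0.
Proof.
have hq0 : (0 < q)%N by apply: ltnW.
have ba : b != a by rewrite eq_sym.
have Kb := @key F q t hq ht hc hcard hn b a (ba) g hg
  (fun x xb xa => Hb x xa xb) (a - b)^-1.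
have abnz : a - b != 0 by rewrite subr_eq0.
rewrite mulVf // tr1 ht0 mul0r addr0 mulrC in Kb.
have Tb : trF q t (g.[b] / (b - a)) = 0.
  by rewrite -opprB invrN mulrN tr_opp // Kb oppr0.
apply: (@tr_nondeg F q t hq ht hcard) => u.
have := @key F q t hq ht hc hcard hn a b ab g hg Ha u.
by rewrite Tb mulr0 addr0.
Qed.

Lemma surj {B F : finFieldType} (iota : {rmorphism B -> F}) (x : F) :
  x ^+ #|B| = x -> exists b, iota b = x.
Proof.
move=> hx.
case: (pickP (fun b => iota b == x)) => [b /eqP <-|H]; first by exists b.
exfalso.
pose P : {poly F} := 'X^#|B| - 'X.
have q1 : (1 < #|B|)%N := finNzRing_gt1 B.
have sP : size P = #|B|.+1.
  by rewrite size_polyDl ?size_polyXn // size_polyN size_polyX ltnS.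
have Pnz : P != 0 by rewrite -size_poly_eq0 sP.
have Hr : all (root P) (x :: map iota (enum B)).
  rewrite /= rootE /P !hornerE hx subrr eqxx /=.
  apply/allP => y /mapP [b _ ->]; rewrite rootE !hornerE -rmorphXn expf_card subrr //.
have U : uniq (x :: map iota (enum B)).
  rewrite /= (map_inj_uniq (fmorph_inj iota)) ?enum_uniq andbT.
  by apply/mapP => [[b _ E]]; have := H b; rewrite E eqxx.
by have := max_poly_roots Pnz Hr U; rewrite sP /= size_map -cardE ltnn.
Qed.

Definition enc {B F : finFieldType} (iota : {rmorphism B -> F}) (x : F) : B :=
  odflt 0 [pick b | iota b == x].

Lemma enc_spec {B F : finFieldType} (iota : {rmorphism B -> F}) (x : F) :
  x ^+ #|B| = x -> iota (enc iota x) = x.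
Proof.
move=> hx; rewrite /enc; case: pickP => [b /eqP //| H].
by have [b E] := @surj _ _ iota x hx; have := H b; rewrite E eqxx.
Qed.

Lemma enc_inj (B F : finFieldType) (iota : {rmorphism B -> F}) (x y : F) :
  x ^+ #|B| = x -> y ^+ #|B| = y -> enc iota x = enc iota y -> x = y.
Proof. by move=> hx hy E; rewrite -(@enc_spec _ _ iota x hx) E enc_spec. Qed.

Theorem theorem2 (p m t : nat) (B F : finFieldType) (iota : {rmorphism B -> F}) :
  prime p -> (1 <= m)%N -> (1 <= t)%N ->
  #|B| = (p ^ m)%N -> #|F| = (p ^ (m * t))%N ->
  (p %| t)%N ->
  forall alpha_star alpha_bar : F, alpha_star != alpha_bar ->
  exists (h : F -> F -> 'I_2 -> B) (R1 R2 : (F -> 'I_2 -> B) -> F),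
    forall f : {poly F}, RS_poly (rs_dim F B) f ->
      R1 (downloaded alpha_star alpha_bar h f) = f.[alpha_star] /\
      R2 (downloaded alpha_star alpha_bar h f) = f.[alpha_bar].
Proof.
move=> pr hm ht hB hF ptd a1 a2 a12.
set q := #|B|.
have pch : p \in [pchar F] := card_finPcharP hF pr.
have hc : [pchar F].-nat q by rewrite /q hB pnatX (pnatE _ pr) pch.
have hq : (1 < q)%N := finNzRing_gt1 B.
have hq0 : (0 < q)%N by apply: ltnW.
have hcard : #|F| = (q ^ t)%N by rewrite hF /q hB expnM.
have hn : (#|F|%:R : F) = 0.
  by rewrite hF natrX (pcharf0 pch) expr0n muln_eq0 eqn0Ngt hm eqn0Ngt ht.
have ht0 : (t%:R : F) = 0 by rewrite -(divnK ptd) natrM (pcharf0 pch) mulr0.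
have hk : rs_dim F B = (#|F| - q ^ t.-1)%N.
  rewrite /rs_dim -/q hcard; congr (_ - _)%N.
  by rewrite -{1}(prednK ht) expnS mulKn.
pose ai (i : 'I_2) := if val i == 0%N then a1 else a2.
pose h := fun (x y : F) (i : 'I_2) => enc iota (trF q t (y / (x - ai i))).
have corr : forall f f' : {poly F}, RS_poly (rs_dim F B) f -> RS_poly (rs_dim F B) f' ->
    downloaded a1 a2 h f = downloaded a1 a2 h f' -> f.[a1] = f'.[a1] /\ f.[a2] = f'.[a2].
  move=> f f' Hf Hf' E.
  have hg : (size (f - f')%R <= #|F| - q ^ t.-1)%N.
    rewrite -hk; apply: leq_trans (size_polyD _ _) _.
    by rewrite size_polyN geq_max; apply/andP; split.
  have Hd : forall x, x != a1 -> x != a2 -> forall i,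
      trF q t ((f - f').[x] / (x - ai i)) = 0.
    move=> x xa1 xa2 i.
    have := congr1 (fun D : F -> 'I_2 -> B => D x i) E; rewrite /downloaded xa1 xa2 /= /h.
    move/enc_inj; rewrite !tr_fix ?fixF // => /(_ erefl erefl) Et.
    by rewrite hornerD hornerN mulrBl tr_add // tr_opp // Et subrr.
  have Ha : forall x, x != a1 -> x != a2 -> trF q t ((f - f').[x] / (x - a1)) = 0.
    by move=> x xa1 xa2; have := Hd x xa1 xa2 ord0.
  have Hb : forall x, x != a1 -> x != a2 -> trF q t ((f - f').[x] / (x - a2)) = 0.
    by move=> x xa1 xa2; have := Hd x xa1 xa2 ord_max.
  have a21 : a2 != a1 by rewrite eq_sym.
  split; apply/eqP; rewrite -subr_eq0 -hornerN -hornerD; apply/eqP.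
    exact: (@kernel F q t hq ht hc hcard hn ht0 a1 a2 a12 (f - f') hg Ha Hb).
  exact: (@kernel F q t hq ht hc hcard hn ht0 a2 a1 a21 (f - f') hg
            (fun x x2 x1 => Hb x x1 x2) (fun x x2 x1 => Ha x x1 x2)).
pose R (a : F) := fun d : F -> 'I_2 -> B => epsilon (inhabits (0 : F))
  (fun z => exists f', RS_poly (rs_dim F B) f' /\ downloaded a1 a2 h f' = d /\ f'.[a] = z).
have Rspec : forall a f, RS_poly (rs_dim F B) f -> exists f',
    RS_poly (rs_dim F B) f' /\ downloaded a1 a2 h f' = downloaded a1 a2 h f /\
    f'.[a] = R a (downloaded a1 a2 h f).
  move=> a f Hf; apply: (epsilon_spec (inhabits (0 : F)) (fun z => exists f', RS_poly (rs_dim F B) f' /\ downloaded a1 a2 h f' = downloaded a1 a2 h f /\ f'.[a] = z)).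
  by exists f.[a]; exists f.
exists h, (R a1), (R a2) => f Hf; split.
  have [f' [Hf' [E <-]]] := Rspec a1 f Hf.
  by have [] := corr f' f Hf' Hf E.
have [f' [Hf' [E <-]]] := Rspec a2 f Hf.
by have [] := corr f' f Hf' Hf E.
Qed.
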